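(* Let $K$ be a field and let $C=(c_{i,j})_{1\le i,j\le n}$ be a frieze matrix over $K$. Then for all $1\le i\le n-1$, $$c_{i,n}c_{1,i+1}-c_{i+1,n}c_{1,i} = c_{i,i+1}c_{1,n}.$$
   Context: A frieze matrix is a symmetric $n\times n$ matrix $C=(c_{i,j})$ over $K$ such that $c_{i,j}=0$ if and only if $i=j$, and satisfying the generalized diamond rule $c_{i,j}c_{i+1,j+1}-c_{i+1,j}c_{i,j+1}=c_{i,i+1}c_{j,j+1}$ for all indices with $n-1\ge j\ge i+1\ge 2$. *)

(* Defs.v *)
From mathcomp Require Import all_boot all_algebra.
Set Implicit Arguments. Unset Strict Implicit. Unset Printing Implicit Defensive.
Import GRing.Theory.
Local Open Scope ring_scope.

(* 1-indexed entry c_{i,j} of an n x n matrix, for 1 <= i,j <= n.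
   Out-of-range indices give 0 (never used in the statements below). *)
Definition fent (K : fieldType) (n : nat) (C : 'M[K]_n) (i j : nat) : K :=
  match insub i.-1, insub j.-1 with
  | Some i', Some j' => C i' j'
  | _, _ => 0
  end.

Definition frieze_matrix (K : fieldType) (n : nat) (C : 'M[K]_n) : Prop :=
  [/\ C^T = C,
      (forall i j : 'I_n, (C i j == 0) = (i == j)) &
      (forall i j : nat, (1 <= i)%N -> (i + 1 <= j)%N -> (j <= n - 1)%N ->
         fent C i j * fent C i.+1 j.+1 - fent C i.+1 j * fent C i j.+1
         = fent C i i.+1 * fent C j j.+1)].

(* Main.v *)
Require Import Defs.
From mathcomp Require Import all_boot all_algebra.
From mathcomp Require Import ring zify.
Import GRing.Theory.
Local Open Scope ring_scope.

Section Abs.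
Variable K : fieldType.

Lemma alg_row (A A' Aj B p q r p' q' r' : K) : q != 0 ->
  p * q' - q * p' = A * Aj -> q * r' - r * q' = A' * Aj ->
  A' * p + A * r = B * q -> A' * p' + A * r' = B * q'.
Proof.
move=> qnz D1 D2 IH; apply: (mulfI qnz).
have e1 : q * p' = p * q' - A * Aj by rewrite -D1; ring.
have e2 : q * r' = A' * Aj + r * q' by rewrite -D2; ring.
transitivity (A' * (q * p') + A * (q * r')); first ring.
rewrite e1 e2; transitivity (q' * (A' * p + A * r)); first ring.
rewrite IH; ring.
Qed.

Lemma alg_col (A A' Ak B u v w u' v' w' : K) : v' != 0 ->
  u * v' - u' * v = Ak * A -> v * w' - v' * w = Ak * A' ->
  A' * u' + A * w' = B * v' -> A' * u + A * w = B * v.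
Proof.
move=> nz D1 D2 IH; apply: (mulfI nz).
have e1 : v' * u = Ak * A + u' * v by rewrite -D1; ring.
have e2 : v' * w = v * w' - Ak * A' by rewrite -D2; ring.
transitivity (A' * (v' * u) + A * (v' * w)); first ring.
rewrite e1 e2; transitivity (v * (A' * u' + A * w')); first ring.
rewrite IH; ring.
Qed.

Lemma alg_main (A A' B s t tt x y z N : K) : A != 0 ->
  A' * s + A * tt = B * t -> A' * x + A * z = B * y ->
  x * t - y * s = A * N -> y * tt - z * t = A' * N.
Proof.
move=> nz h1 h2 IH; apply: (mulfI nz).
have e1 : A * tt = B * t - A' * s by rewrite -h1; ring.
have e2 : A * z = B * y - A' * x by rewrite -h2; ring.
transitivity (y * (A * tt) - t * (A * z)); first ring.
rewrite e1 e2; transitivity (A' * (x * t - y * s)); first ring.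
rewrite IH; ring.
Qed.

Variables (c : nat -> nat -> K) (n : nat).
Hypothesis H0 : forall i, (1 <= i)%N -> (i <= n)%N -> c i i = 0.
Hypothesis Hnz : forall i j, (1 <= i)%N -> (i < j)%N -> (j <= n)%N -> c i j != 0.
Hypothesis HD : forall i j : nat, (1 <= i)%N -> (i + 1 <= j)%N -> (j <= n - 1)%N ->
         c i j * c i.+1 j.+1 - c i.+1 j * c i j.+1 = c i i.+1 * c j j.+1.

Lemma rowrec i j : (1 <= i)%N -> (i.+2 <= j)%N -> (j <= n)%N ->
  c i.+1 i.+2 * c i j + c i i.+1 * c i.+2 j = c i i.+2 * c i.+1 j.
Proof.
move=> hi hj hn.
suff H : forall d, (i.+2 + d <= n)%N ->
  c i.+1 i.+2 * c i (i.+2 + d) + c i i.+1 * c i.+2 (i.+2 + d) = c i i.+2 * c i.+1 (i.+2 + d).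
  have -> : j = (i.+2 + (j - i.+2))%N by lia.
  apply: H; lia.
elim=> [|d IH] hd.
  rewrite addn0 (H0 i.+2) //; last by lia.
  ring.
rewrite addnS.
apply: (@alg_row _ _ (c (i.+2 + d) (i.+2 + d).+1) _ (c i (i.+2 + d))
  (c i.+1 (i.+2 + d)) (c i.+2 (i.+2 + d))).
- apply: Hnz; lia.
- apply: HD; lia.
- apply: HD; lia.
- apply: IH; lia.
Qed.

Lemma colrec i k : (1 <= k)%N -> (k <= i)%N -> (i.+2 <= n)%N ->
  c i.+1 i.+2 * c k i + c i i.+1 * c k i.+2 = c i i.+2 * c k i.+1.
Proof.
move=> hk hki hn.
suff H : forall d k, i = (k + d)%N -> (1 <= k)%N ->
  c i.+1 i.+2 * c k i + c i i.+1 * c k i.+2 = c i i.+2 * c k i.+1.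
  by apply: (H (i - k)%N); lia.
elim=> [|d IH] k' e hk'.
  rewrite addn0 in e; subst k'.
  rewrite (H0 i) //; last by lia.
  ring.
apply: (@alg_col _ _ (c k' k'.+1) _ _ _ _ (c k'.+1 i) (c k'.+1 i.+1)
  (c k'.+1 i.+2)).
- apply: Hnz; lia.
- apply: HD; lia.
- apply: HD; lia.
- apply: (IH k'.+1); lia.
Qed.

Lemma mainabs i : (1 <= i)%N -> (i <= n - 1)%N ->
  c i n * c 1 i.+1 - c i.+1 n * c 1 i = c i i.+1 * c 1 n.
Proof.
elim: i => [//|i IH] _ hi.
case: (posnP i) => [->|ip].
  rewrite (H0 1) //; last by lia.
  ring.
apply: (@alg_main (c i i.+1) _ (c i i.+2) (c 1 i) _ _ (c i n)).
- apply: Hnz; lia.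
- apply: colrec; lia.
- apply: rowrec; lia.
- apply: IH; lia.
Qed.

End Abs.

Lemma fentE (K : fieldType) (n : nat) (C : 'M[K]_n) i j (hi : (i.-1 < n)%N) (hj : (j.-1 < n)%N) :
  fent C i j = C (Ordinal hi) (Ordinal hj).
Proof.
rewrite /fent insubT insubT /=.
by congr (C _ _); apply: val_inj.
Qed.

Theorem proposition4p5 (K : fieldType) (n : nat) (C : 'M[K]_n) :
  frieze_matrix C ->
  forall i : nat, (1 <= i)%N -> (i <= n - 1)%N ->
    fent C i n * fent C 1 i.+1 - fent C i.+1 n * fent C 1 i
    = fent C i i.+1 * fent C 1 n.
Proof.
case=> _ Hz HD; apply: mainabs => //.
- move=> i h1 h2.
  have hi : (i.-1 < n)%N by lia.
  rewrite (@fentE _ _ C _ _ hi hi); apply/eqP; by rewrite Hz.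
- move=> i j h1 h2 h3.
  have hi : (i.-1 < n)%N by lia.
  have hj : (j.-1 < n)%N by lia.
  rewrite (@fentE _ _ C _ _ hi hj) Hz; apply/eqP => /(congr1 val) /=; lia.
Qed.
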